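(* Let $h(t)\in\mathbb{R}^l$ and $z(t)\in\mathbb{R}^p$ be processes such that $s(t)=\begin{bmatrix} z(t)\\ h(t)\end{bmatrix}$ is RC and, for every $t\in\mathbb{Z}$, all coordinates of $z(t)$ are orthogonal to $H^h_t$. Then for every $w\in\Sigma^+$ and every $t\in\mathbb{Z}$, all coordinates of $z^z_w(t)$ are orthogonal to $H^h_{t,w}$.
   Context: Setting (RC framework). All random variables on one probability space. $\Sigma$ finite alphabet, $\Sigma^*$ finite words ($\epsilon$ empty), $\Sigma^+=\Sigma^*\setminus\{\epsilon\}$, $|w|$ length. Fix $p_\sigma>0$; $p_\epsilon=1$, $p_{\sigma_1\cdots\sigma_k}=\prod_i p_{\sigma_i}$. Inputs: scalar processes $u_\sigma(t)$ with $\sum_\sigma\alpha_\sigma u_\sigma(t)=1$ for constants $\alpha_\sigma$, all first/second moments of $u_w(t)$ finite, where $u_w(t)=u_{\sigma_1}(t-k+1)u_{\sigma_2}(t-k+2)\cdots u_{\sigma_k}(t)$ for $w=\sigma_1\cdots\sigma_k$. $z^r_w(t)=r(t-|w|)u_w(t-1)/\sqrt{p_w}$. Admissible set $L\subseteq\Sigma^+$: $\Sigma\subseteq L$; $u_w=0$ a.s. for $w\notin L$; for some $S\subseteq\Sigma\times\Sigma$, a word of length $>1$ is in $L$ iff all its consecutive letter pairs are in $S$. A process $r$ is RC if: (1) $E[r(t)]=0$, $E[z^r_w(t)]=0$, $E[r(t)z^r_w(t)^T]$, $E[z^r_w(t)z^r_v(t)^T]$ finite and independent of $t$; $T^r_{w,v}:=E[z^r_w(t)z^r_v(t)^T]$,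 $\Lambda^r_w:=E[r(t)z^r_w(t)^T]$; (2) $T^r_{\sigma,\sigma'}=0$ for $\sigma\ne\sigma'$; $T^r_{w\sigma,v\sigma'}=0$ for $\sigma\neq\sigma'$ and $T^r_{w\sigma,v\sigma}=T^r_{w,v}$ if $w\sigma\in L$ or $v\sigma\in L$; $T^r_{w\sigma,\sigma'}=0$ for $\sigma\ne\sigma'$ and $T^r_{w\sigma,\sigma}=(\Lambda^r_w)^T$; (3) $T^r_{w,v}=0$ if $w\notin L$ or $v\notin L$; if $w\sigma\in L$ and $v\sigma\notin L$ then $T^r_{v,w}=T^r_{w,v}=0$. Hilbert space generated by random vectors = mean-square closure of span of their coordinates. $H^h_t$: generated by $\{z^h_v(t)\mid v\in\Sigma^+\}$; $H^h_{t,w}$: generated by $\{z^h_{vw}(t)\mid v\in\Sigma^+\}$. *)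

(* Defs.v *)
From HB Require Import structures.
From mathcomp Require Import all_boot all_order all_algebra.
From mathcomp Require Import all_classical all_reals all_analysis.
Set Implicit Arguments. Unset Strict Implicit. Unset Printing Implicit Defensive.
Import Order.TTheory GRing.Theory Num.Theory.
Local Open Scope ring_scope.
Local Open Scope classical_set_scope.

Section RCframework.
Context {R : realType} {d : measure_display} {Omega : measurableType d}.
Variable (P : probability Omega R).
Context {Sigma : finType}.
Variables (u : Sigma -> int -> Omega -> R) (pr : Sigma -> R).

Definition rv := Omega -> R.

Definition finite_mean (f : rv) := P.-integrable setT (fun x => (f x)%:E).
(* E[f] as a real number (meaningful when finite_mean f) *)
Definition Er (f : rv) : R := fine (\int[P]_x (f x)%:E)%E.

(* u_w(t) = u_{s1}(t-k+1) ... u_{sk}(t) for w = s1...sk *)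
Definition uw (w : seq Sigma) (t : int) : rv :=
  fun x => \prod_(i < size w)
             u (tnth (in_tuple w) i) (t - (size w)%:Z + 1 + (i : nat)%:Z) x.

Definition pw (w : seq Sigma) : R := \prod_(s <- w) pr s.

(* z^r_w(t) = r(t-|w|) u_w(t-1) / sqrt(p_w), coordinatewise;
   an R^n-valued process is given by its coordinates r t i, i : 'I_n *)
Definition zw {n : nat} (r : int -> 'I_n -> rv) (w : seq Sigma) (t : int)
  (i : 'I_n) : rv :=
  fun x => r (t - (size w)%:Z) i x * uw w (t - 1) x / Num.sqrt (pw w).

Definition input_ok (alpha : Sigma -> R) :=
  (forall t, {ae P, forall x, \sum_(s : Sigma) alpha s * u s t x = 1}) /\
  (forall w t, finite_mean (uw w t) /\
               finite_mean (fun x => uw w t x ^+ 2)).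

Definition admissible (L : pred (seq Sigma)) :=
  [/\ (forall w, L w -> w != [::]),
      (forall s, L [:: s]),
      (forall w t, w != [::] -> ~~ L w -> {ae P, forall x, uw w t x = 0}) &
      exists S : rel Sigma, forall w, (1 < size w)%N -> L w = sorted S w].

(* T^r_{w,v} and Lambda^r_w (taken at t = 0; RC requires t-independence) *)
Definition Tmx {n} (r : int -> 'I_n -> rv) (w v : seq Sigma) (i j : 'I_n) : R :=
  Er (fun x => zw r w 0 i x * zw r v 0 j x).
Definition Lmx {n} (r : int -> 'I_n -> rv) (w : seq Sigma) (i j : 'I_n) : R :=
  Er (fun x => r 0 i x * zw r w 0 j x).

Definition RC1 {n} (r : int -> 'I_n -> rv) :=
  [/\ (forall t i, finite_mean (r t i) /\ Er (r t i) = 0),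
   (forall w t i, w != [::] -> finite_mean (zw r w t i) /\ Er (zw r w t i) = 0),
   (forall w t i j, w != [::] ->
      finite_mean (fun x => r t i x * zw r w t j x) /\
      Er (fun x => r t i x * zw r w t j x) = Lmx r w i j) &
   (forall w v t i j, w != [::] -> v != [::] ->
      finite_mean (fun x => zw r w t i x * zw r v t j x) /\
      Er (fun x => zw r w t i x * zw r v t j x) = Tmx r w v i j)].

Definition RC2 (L : pred (seq Sigma)) {n} (r : int -> 'I_n -> rv) :=
   [/\ (forall s s' i j, s != s' -> Tmx r [:: s] [:: s'] i j = 0),
       (forall w v s s' i j, w != [::] -> v != [::] -> s != s' ->
          Tmx r (rcons w s) (rcons v s') i j = 0),
       (forall w v s i j, w != [::] -> v != [::] ->
          L (rcons w s) || L (rcons v s) ->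
          Tmx r (rcons w s) (rcons v s) i j = Tmx r w v i j),
       (forall w s s' i j, w != [::] -> s != s' ->
          Tmx r (rcons w s) [:: s'] i j = 0) &
       (forall w s i j, w != [::] -> Tmx r (rcons w s) [:: s] i j = Lmx r w j i)].

Definition RC3 (L : pred (seq Sigma)) {n} (r : int -> 'I_n -> rv) :=
   (forall w v i j, w != [::] -> v != [::] -> ~~ L w || ~~ L v ->
      Tmx r w v i j = 0) /\
   (forall w v s i j, w != [::] -> v != [::] -> L (rcons w s) ->
      ~~ L (rcons v s) -> Tmx r v w j i = 0 /\ Tmx r w v i j = 0).

Definition RC (L : pred (seq Sigma)) {n} (r : int -> 'I_n -> rv) :=
  [/\ RC1 r, RC2 L r & RC3 L r].

(* Hilbert space generated by a family G of scalar random variables: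
   mean-square closure of the linear span *)
Definition span_of (G : set rv) (Y : rv) :=
  exists (m : nat) (c : 'I_m -> R) (g : 'I_m -> rv),
    (forall k, G (g k)) /\ Y = (fun x => \sum_(k < m) c k * g k x).

Definition hilbert_gen (G : set rv) : set rv := fun X =>
  measurable_fun setT X /\
  forall eps : R, 0 < eps -> exists Y, span_of G Y /\
    finite_mean (fun x => (X x - Y x) ^+ 2) /\ Er (fun x => (X x - Y x) ^+ 2) < eps.

Definition orth (X : rv) (H : set rv) :=
  forall Y, H Y -> finite_mean (fun x => X x * Y x) /\ Er (fun x => X x * Y x) = 0.

Definition H_t {l} (h : int -> 'I_l -> rv) (t : int) : set rv :=
  hilbert_gen (fun X => exists v i, v != [::] /\ X = zw h v t i).
Definition H_tw {l} (h : int -> 'I_l -> rv) (t : int) (w : seq Sigma) : set rv :=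
  hilbert_gen (fun X => exists v i, v != [::] /\ X = zw h (v ++ w) t i).

End RCframework.

Definition stack {R : realType} {Omega : Type} {p l : nat}
  (z : int -> 'I_p -> Omega -> R) (h : int -> 'I_l -> Omega -> R)
  : int -> 'I_(p + l)%N -> Omega -> R :=
  fun t (i : 'I_(p + l)%N) => match fintype.split i with inl j => z t j | inr j => h t j end.

(* Main.v *)
Require Import Defs.
From HB Require Import structures.
From mathcomp Require Import all_boot all_order all_algebra.
From mathcomp Require Import all_classical all_reals all_analysis.
From mathcomp Require Import measurable_realfun.
From mathcomp Require Import ring lra.
Import Order.TTheory GRing.Theory Num.Theory.
Import numFieldNormedType.Exports.
Local Open Scope ring_scope.

Section Helpers.
Context {R : realType} {d : measure_display} {Omega : measurableType d}.
Variable (P : probability Omega R).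

Lemma fm_meas {f : Omega -> R} : finite_mean P f -> measurable_fun setT f.
Proof. by move=> /(measurable_int P) /measurable_EFinP. Qed.

Lemma fm_le {f g : Omega -> R} : measurable_fun setT f -> finite_mean P g ->
  (forall x, `|f x| <= `|g x|) -> finite_mean P f.
Proof.
move=> mf ig fg; apply: (le_integrable measurableT _ _ ig) => //.
  exact/measurable_EFinP.
by move=> x _; rewrite /= lee_fin.
Qed.

Lemma fmD {f g : Omega -> R} : finite_mean P f -> finite_mean P g ->
  finite_mean P (fun x => f x + g x).
Proof.
move=> ff fg; have := integrableD measurableT ff fg.
by apply: eq_integrable => // x _; rewrite /= EFinD.
Qed.

Lemma fmZ (c : R) {f : Omega -> R} : finite_mean P f ->
  finite_mean P (fun x => c * f x).
Proof.
move=> ff; have := integrableZl measurableT c ff.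
by apply: eq_integrable => // x _; rewrite /= EFinM.
Qed.

Lemma fmB {f g : Omega -> R} : finite_mean P f -> finite_mean P g ->
  finite_mean P (fun x => f x - g x).
Proof.
move=> ff fg; have := fmD ff (fmZ (-1) fg).
by apply: eq_integrable => // x _; rewrite mulN1r.
Qed.

Lemma fm_abs {f : Omega -> R} : finite_mean P f -> finite_mean P (fun x => `|f x|).
Proof.
move=> ff; apply: (fm_le _ ff); last by move=> x; rewrite normr_id.
exact: measurableT_comp (fm_meas ff).
Qed.

Lemma fm0 : finite_mean P (fun _ => 0).
Proof. exact: integrable0. Qed.

Lemma Er0 : Er P (fun _ => 0) = 0.
Proof. by rewrite /Er integral0. Qed.

Lemma ErD {f g : Omega -> R} : finite_mean P f -> finite_mean P g ->
  Er P (fun x => f x + g x) = Er P f + Er P g.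
Proof. move=> ff fg; exact: (RintegralD measurableT ff fg). Qed.

Lemma ErZ (c : R) {f : Omega -> R} : finite_mean P f ->
  Er P (fun x => c * f x) = c * Er P f.
Proof. move=> ff; exact: RintegralZl. Qed.

Lemma Er_le {f g : Omega -> R} : finite_mean P f -> finite_mean P g ->
  (forall x, f x <= g x) -> Er P f <= Er P g.
Proof. move=> ff fg fle; exact: (le_Rintegral measurableT ff fg). Qed.

Lemma Er_abs {f : Omega -> R} : finite_mean P f -> `|Er P f| <= Er P (fun x => `|f x|).
Proof. move=> ff; exact: (le_normr_Rintegral measurableT ff). Qed.

Lemma Er_ge0 {f : Omega -> R} : (forall x, 0 <= f x) -> 0 <= Er P f.
Proof. by move=> f0; apply: Rintegral_ge0. Qed.

Lemma fm_sum m (c : 'I_m -> R) (g : 'I_m -> Omega -> R) :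
  (forall k, finite_mean P (g k)) ->
  finite_mean P (fun x => \sum_(k < m) c k * g k x) /\
  Er P (fun x => \sum_(k < m) c k * g k x) = \sum_(k < m) c k * Er P (g k).
Proof.
move=> fg; elim: m c g fg => [|m IH] c g fg.
  have E : (fun x : Omega => \sum_(k < 0) c k * g k x) = (fun _ => 0).
    by apply: boolp.funext => x; rewrite big_ord0.
  by rewrite E big_ord0; split; [exact: fm0 | exact: Er0].
have [IH1 IH2] := IH (fun k => c (lift ord0 k)) (fun k => g (lift ord0 k)) (fun k => fg _).
have E : (fun x : Omega => \sum_(k < m.+1) c k * g k x) =
   (fun x => c ord0 * g ord0 x + \sum_(k < m) c (lift ord0 k) * g (lift ord0 k) x).
  by apply: boolp.funext => x; rewrite big_ord_recl.
rewrite E big_ord_recl; split; first exact: fmD (fmZ _ (fg _)) IH1.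
by rewrite ErD ?ErZ ?IH2 //; exact: fmZ.
Qed.

Lemma ineq_ab (a b e : R) : 0 < e -> `|a * b| <= (e * a ^+ 2 + b ^+ 2 / e) / 2.
Proof.
move=> e0; rewrite normrM.
have hA := normr_ge0 a; have hB := normr_ge0 b.
rewrite -(real_normK (num_real a)) -(real_normK (num_real b)).
set A := `|a|; set B := `|b|.
have -> : B ^+ 2 / e = e * (B / e) ^+ 2 by field; rewrite gt_eqF.
have -> : A * B = e * (A * (B / e)) by field; rewrite gt_eqF.
have := sqr_ge0 (A - B / e).
have c0 : 0 <= B / e by apply: divr_ge0 => //; exact: ltW.
nra.
Qed.

End Helpers.

Lemma ineq_ab2 {R : realType} (a b e : R) : 0 < e ->
  `|a * b| <= 2^-1 * (e * a ^+ 2 + e^-1 * b ^+ 2).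
Proof.
move=> e0; rewrite (_ : 2^-1 * _ = (e * a ^+ 2 + b ^+ 2 / e) / 2); first exact: ineq_ab.
by rewrite mulrC [e^-1 * _]mulrC.
Qed.

Lemma stack_l {R : realType} {Omega : Type} {p l : nat}
  (z : int -> 'I_p -> Omega -> R) (h : int -> 'I_l -> Omega -> R) t i :
  stack z h t (lshift l i) = z t i.
Proof. by rewrite /stack (@unsplitK p l (inl i)). Qed.

Lemma stack_r {R : realType} {Omega : Type} {p l : nat}
  (z : int -> 'I_p -> Omega -> R) (h : int -> 'I_l -> Omega -> R) t i :
  stack z h t (rshift p i) = h t i.
Proof. by rewrite /stack (@unsplitK p l (inr i)). Qed.

Theorem mainTheorem5 (R : realType) (d : measure_display) (Omega : measurableType d)
  (P : probability Omega R) (Sigma : finType)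
  (u : Sigma -> int -> Omega -> R) (pr : Sigma -> R) (alpha : Sigma -> R)
  (L : pred (seq Sigma)) (p l : nat)
  (z : int -> 'I_p -> Omega -> R) (h : int -> 'I_l -> Omega -> R) :
  (forall s, 0 < pr s) ->
  input_ok P u alpha ->
  admissible P u L ->
  RC P u pr L (stack z h) ->
  (forall (t : int) (i : 'I_p), orth P (z t i) (H_t P u pr h t)) ->
  forall (w : seq Sigma) (t : int) (i : 'I_p), w != [::] ->
    orth P (zw u pr z w t i) (H_tw P u pr h t w).
Proof.
move=> hpr inok adm [[RC1a RC1b RC1c RC1d] [C1 C2 C3 C4 C5] [R3a R3b]] orthz.
have zwl : forall w t i, zw u pr (stack z h) w t (lshift l i) = zw u pr z w t i.
  by move=> w t i; rewrite /zw stack_l.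
have zwr : forall w t i, zw u pr (stack z h) w t (rshift p i) = zw u pr h w t i.
  by move=> w t i; rewrite /zw stack_r.
have Tsym : forall n (r : int -> 'I_n -> Omega -> R) w v i j,
    Tmx P u pr r w v i j = Tmx P u pr r v w j i.
  move=> n r w v i j; rewrite /Tmx; congr Er; apply: boolp.funext => x.
  exact: mulrC.
have memH : forall v j t', v != [::] -> H_t P u pr h t' (zw u pr h v t' j).
  move=> v j t' vne; split.
    have := (RC1b v t' (rshift p j) vne).1; rewrite zwr; exact: fm_meas.
  move=> eps eps0; exists (zw u pr h v t' j); split.
    exists 1%N, (fun _ => 1), (fun _ => zw u pr h v t' j); split.
      by move=> k; exists v, j.
    by apply: boolp.funext => x; rewrite big_ord1 mul1r.
  rewrite (_ : (fun x => _) = fun _ => 0); last first.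
    by apply: boolp.funext => x; rewrite subrr expr0n.
  by split; [exact: fm0 | rewrite Er0].
have KT : forall v, v != [::] -> forall w i j, w != [::] ->
    Tmx P u pr (stack z h) w (v ++ w) (lshift l i) (rshift p j) = 0.
  move=> v vne w; elim/last_ind: w => [//|w' s IH] i j _.
  have [->|w'ne] := eqVneq w' [::].
    rewrite Tsym cats1 /= C5 // /Lmx stack_l zwr.
    exact: (orthz 0 i _ (memH v j 0 vne)).2.
  rewrite -rcons_cat.
  have vw'ne : v ++ w' != [::] by rewrite -size_eq0 size_cat; case: (v) vne.
  have [HL|HL] := boolP (L (rcons w' s) || L (rcons (v ++ w') s)).
    by rewrite C3 // IH.
  rewrite negb_or in HL; case/andP: HL => HL1 HL2.
  by apply: R3a; rewrite ?HL1 //= -?size_eq0 ?size_rcons.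
move=> w t i wne.
set Z := zw u pr z w t i.
have hZfm : finite_mean P Z by have := (RC1b w t (lshift l i) wne).1; rewrite zwl.
have hZ2 : finite_mean P (fun x => Z x ^+ 2).
  have := (RC1d w w t (lshift l i) (lshift l i) wne wne).1; rewrite zwl.
  by apply: eq_integrable => // x _; rewrite /= expr2.
have hG : forall v j, v != [::] ->
    finite_mean P (fun x => Z x * zw u pr h (v ++ w) t j x) /\
    Er P (fun x => Z x * zw u pr h (v ++ w) t j x) = 0.
  move=> v j vne.
  have vwne : v ++ w != [::] by rewrite -size_eq0 size_cat; case: (v) vne.
  have [A B] := RC1d w (v ++ w) t (lshift l i) (rshift p j) wne vwne.
  by move: A B; rewrite zwl zwr => A ->; split => //; exact: KT.
have hY : forall Y, span_of (fun X => exists v i, v != [::] /\ X = zw u pr h (v ++ w) t i) Y ->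
    finite_mean P (fun x => Z x * Y x) /\ Er P (fun x => Z x * Y x) = 0.
  move=> Y [m [c [g [Gg ->]]]].
  have E : (fun x => Z x * \sum_(k < m) c k * g k x) =
           (fun x => \sum_(k < m) c k * (fun y => Z y * g k y) x).
    by apply: boolp.funext => x; rewrite mulr_sumr; apply: eq_bigr => k _; rewrite mulrCA.
  have Gk : forall k, finite_mean P (fun y => Z y * g k y) /\ Er P (fun y => Z y * g k y) = 0.
    by move=> k; have [v [j [vne ->]]] := Gg k; exact: hG.
  have [F1 F2] := fm_sum P m c (fun k => fun y => Z y * g k y) (fun k => (Gk k).1).
  rewrite E; split => //; rewrite F2; apply: big1 => k _.
  by rewrite (Gk k).2 mulr0.
move=> X [mX appr].
have key : forall e, 0 < e -> forall Y,
    span_of (fun X => exists v i, v != [::] /\ X = zw u pr h (v ++ w) t i) Y ->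
    finite_mean P (fun x => (X x - Y x) ^+ 2) ->
    [/\ finite_mean P (fun x => Z x * X x),
        finite_mean P (fun x => Z x * (X x - Y x)),
        Er P (fun x => Z x * X x) = Er P (fun x => Z x * (X x - Y x)) &
        `|Er P (fun x => Z x * (X x - Y x))| <=
          2^-1 * (e * Er P (fun x => Z x ^+ 2) + e^-1 * Er P (fun x => (X x - Y x) ^+ 2))].
  move=> e e0 Y spY fD2.
  have [fZY EZY] := hY Y spY.
  have fB : forall e', finite_mean P
      (fun x => 2^-1 * (e' * Z x ^+ 2 + e'^-1 * (X x - Y x) ^+ 2)).
    by move=> e'; apply: fmZ; apply: fmD; apply: fmZ.
  have fZX : finite_mean P (fun x => Z x * X x).
    apply: (fm_le P (measurable_funM (fm_meas P hZfm) mX)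
        (fmD P (fm_abs P fZY) (fB 1))).
    move=> x; rewrite (ger0_norm (addr_ge0 (normr_ge0 _) _)); last first.
      apply: mulr_ge0; first by rewrite invr_ge0.
      by apply: addr_ge0; apply: mulr_ge0; rewrite ?invr_ge0 ?sqr_ge0.
    rewrite /= (_ : Z x * X x = Z x * Y x + Z x * (X x - Y x)); last by ring.
    apply: (le_trans (ler_normD _ _)); apply: lerD => //.
    exact: ineq_ab2.
  have fZD : finite_mean P (fun x => Z x * (X x - Y x)).
    have := fmB P fZX fZY; apply: eq_integrable => // x _.
    by rewrite /= mulrBr.
  split => //.
    rewrite (_ : (fun x => Z x * X x) = fun x => Z x * Y x + Z x * (X x - Y x)); last first.
      by apply: boolp.funext => x; ring.
    by rewrite (ErD P fZY fZD) EZY add0r.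
  apply: (le_trans (Er_abs P fZD)).
  have Eb : Er P (fun x => 2^-1 * (e * Z x ^+ 2 + e^-1 * (X x - Y x) ^+ 2)) =
      2^-1 * (e * Er P (fun x => Z x ^+ 2) + e^-1 * Er P (fun x => (X x - Y x) ^+ 2)).
    rewrite (ErZ P _ (f := fun x => e * Z x ^+ 2 + e^-1 * (X x - Y x) ^+ 2));
      last by apply: fmD; apply: fmZ.
    rewrite (ErD P (f := fun x => e * Z x ^+ 2) (g := fun x => e^-1 * (X x - Y x) ^+ 2));
      try by apply: fmZ.
    by rewrite (ErZ P _ (f := fun x => Z x ^+ 2)) // (ErZ P _ (f := fun x => (X x - Y x) ^+ 2)).
  rewrite -Eb; apply: (Er_le P (fm_abs P fZD) (fB e)).
  by move=> x; exact: ineq_ab2.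
have [Y1 [sp1 [fd1 _]]] := appr 1 ltr01.
have [fZX _ _ _] := key 1 ltr01 Y1 sp1 fd1.
split => //.
set x0 := Er P (fun x => Z x * X x).
have EZ2 : 0 <= Er P (fun x => Z x ^+ 2) by apply: (Er_ge0 P) => x; exact: sqr_ge0.
suff H : forall eta, 0 < eta -> `|x0| <= eta.
  apply/eqP; rewrite -normr_eq0; have := normr_ge0 x0.
  rewrite le_eqVlt => /orP[/eqP <-//|pos].
  have := H (`|x0| / 2); lra.
move=> eta eta0.
set a := Er P (fun x => Z x ^+ 2) in EZ2 *.
have e0 : 0 < eta / (a + 1) by apply: divr_gt0 => //; lra.
set e := eta / (a + 1) in e0 *.
have [Y [spY [fD ED]]] := appr (eta * e) (mulr_gt0 eta0 e0).
have [_ _ Ex Hb] := key e e0 Y spY fD.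
rewrite /x0 Ex; apply: (le_trans Hb).
set b := Er P (fun x => (X x - Y x) ^+ 2) in ED Hb *.
have h1 : e * a <= eta.
  rewrite /e mulrAC ler_pdivrMr; [nra|lra].
have h2 : e^-1 * b <= eta.
  by rewrite mulrC ler_pdivrMr //; exact: ltW.
move: h1 h2; set q := e^-1 * b; set r := e * a => h1 h2.
lra.
Qed.
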